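(* Let $A,B,C,D$ be finite-dimensional Hilbert spaces with $|A||B|=|C||D|$, let $U_{AB\to CD}$ be a maximally $I_3$-scrambling unitary, i.e. $I_3=-2\log\min\{|A|,|B|,|C|,|D|\}$ on its Choi state $\rho_{ABCD}$. If $A$ or $C$ has the smallest dimension among the four subsystems, then $\rho_{AC}$ is maximally mixed and $I(A;C)=0$. As a consequence, the residual channel $\mathcal N_{A\to C}[\sigma_A]=\mathrm{tr}_D[U(\sigma_A\otimes\tau_B)U^\dagger]$ is completely depolarizing, i.e. $\mathcal N_{A\to C}[\sigma_A]=\tau_C$ for every state $\sigma_A$.
   Context: $|X|$ denotes dimension and $\tau_X$ the maximally mixed state on $X$. The Choi state of $U_{AB\to CD}$ is $\rho_{ABCD}=U_{A'B'\to CD}(\Phi^+_{AA'}\otimes\Phi^+_{BB'})U^\dagger$ with $\Phi^+_{XX'}=|X|^{-1/2}\sum_i|ii\rangle$. Entropies are von Neumann with base-2 logarithms, $I(X;Y)=S(X)+S(Y)-S(XY)$, and the tripartite information is $I_3=I_3(A;C;D)=I(A;C)+I(A;D)-I(A;CD)$ evaluated on the Choi state. *)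

(* Defs.v *)
From HB Require Import structures.
From mathcomp Require Import all_boot all_order all_algebra.
From mathcomp Require Import reals exp.
From mathcomp.real_closed Require Import complex.

Set Implicit Arguments.
Unset Strict Implicit.
Unset Printing Implicit Defensive.

Import Order.TTheory GRing.Theory Num.Theory.
Local Open Scope ring_scope.

Section QInfo.
Variable R : realType.
Local Notation C := R[i].

Definition op (T : finType) := T -> T -> C.

Definition mx_of (T : finType) (X : op T) : 'M[C]_#|T| :=
  \matrix_(i, j) X (enum_val i) (enum_val j).

(* eigenvalues (with algebraic multiplicity) = roots of the characteristic
   polynomial, which splits since R[i] is algebraically closed *)
Definition eigenvalues (n : nat) (M : 'M[C]_n) : seq C :=
  sval (closed_field_poly_normal (char_poly M)).

Definition log2 (x : R) : R := ln x / ln 2.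

Definition xlog2x (x : R) : R := if x == 0 then 0 else x * log2 x.

(* von Neumann entropy S(rho) = - tr rho log2 rho = - sum_lambda lambda log2 lambda
   (eigenvalues of a density operator are real, so we take real parts) *)
Definition entropy (T : finType) (rho : op T) : R :=
  - \sum_(l <- eigenvalues (mx_of rho)) xlog2x (complex.Re l).

Definition ptrace (T K : finType) (rho : op (T * K)%type) : op T :=
  fun t t' => \sum_(k : K) rho (t, k) (t', k).

Definition relabel (T T' : finType) (f : T' -> T) (rho : op T) : op T' :=
  fun x y => rho (f x) (f y).

Definition tensor_op (T K : finType) (X : op T) (Y : op K) : op (T * K)%type :=
  fun p q => X p.1 q.1 * Y p.2 q.2.

Definition maxmixed (T : finType) : op T :=
  fun t t' => (t == t')%:R / #|T|%:R.

Definition conj_by (T K : finType) (U : K -> T -> C) (X : op T) : op K :=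
  fun k k' => \sum_(t : T) \sum_(t' : T) U k t * X t t' * (U k' t')^*.

Definition unitary (T K : finType) (U : K -> T -> C) : Prop :=
  (forall t t' : T, \sum_(k : K) (U k t)^* * U k t' = (t == t')%:R) /\
  (forall k k' : K, \sum_(t : T) U k t * (U k' t)^* = (k == k')%:R).

Definition density (T : finType) (s : op T) : Prop :=
  (forall v : T -> C, 0 <= \sum_(t : T) \sum_(t' : T) (v t)^* * s t t' * v t') /\
  \sum_(t : T) s t t = 1.

Definition Phi (n : nat) : 'I_n * 'I_n -> C :=
  fun p => (p.1 == p.2)%:R / sqrtC n%:R.

Section Choi.
Variables a b c d : nat.
Variable U : ('I_c * 'I_d) -> ('I_a * 'I_b) -> C.

(* Choi vector: (1_{AB} (x) U_{A'B' -> CD}) (|Phi+_{AA'}> (x) |Phi+_{BB'}>),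
   as a vector on A (x) B (x) C (x) D *)
Definition choi_vec (x : 'I_a * 'I_b * 'I_c * 'I_d) : C :=
  let: (al, be, ga, de) := x in
  \sum_(al' : 'I_a) \sum_(be' : 'I_b)
     U (ga, de) (al', be') * (Phi (n:=a) (al, al') * Phi (n:=b) (be, be')).

Definition choi (x y : 'I_a * 'I_b * 'I_c * 'I_d) : C :=
  choi_vec x * (choi_vec y)^*.

Definition rho_A : op 'I_a :=
  ptrace (relabel (fun p : 'I_a * ('I_b * 'I_c * 'I_d) =>
            let: (al, (be, ga, de)) := p in (al, be, ga, de)) choi).
Definition rho_C : op 'I_c :=
  ptrace (relabel (fun p : 'I_c * ('I_a * 'I_b * 'I_d) =>
            let: (ga, (al, be, de)) := p in (al, be, ga, de)) choi).
Definition rho_D : op 'I_d :=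
  ptrace (relabel (fun p : 'I_d * ('I_a * 'I_b * 'I_c) =>
            let: (de, (al, be, ga)) := p in (al, be, ga, de)) choi).
Definition rho_AC : op (('I_a * 'I_c)%type) :=
  ptrace (relabel (fun p : ('I_a * 'I_c) * ('I_b * 'I_d) =>
            let: ((al, ga), (be, de)) := p in (al, be, ga, de)) choi).
Definition rho_AD : op (('I_a * 'I_d)%type) :=
  ptrace (relabel (fun p : ('I_a * 'I_d) * ('I_b * 'I_c) =>
            let: ((al, de), (be, ga)) := p in (al, be, ga, de)) choi).
Definition rho_CD : op (('I_c * 'I_d)%type) :=
  ptrace (relabel (fun p : ('I_c * 'I_d) * ('I_a * 'I_b) =>
            let: ((ga, de), (al, be)) := p in (al, be, ga, de)) choi).
Definition rho_ACD : op (('I_a * ('I_c * 'I_d))%type) :=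
  ptrace (relabel (fun p : ('I_a * ('I_c * 'I_d)) * 'I_b =>
            let: ((al, (ga, de)), be) := p in (al, be, ga, de)) choi).

Definition I_AC : R := entropy rho_A + entropy rho_C - entropy rho_AC.
Definition I_AD : R := entropy rho_A + entropy rho_D - entropy rho_AD.
Definition I_ACD : R := entropy rho_A + entropy rho_CD - entropy rho_ACD.

Definition I3 : R := I_AC + I_AD - I_ACD.

Definition residual_channel (sigma : op 'I_a) : op 'I_c :=
  ptrace (conj_by U (tensor_op sigma (maxmixed (T:='I_b)))).

End Choi.
End QInfo.

Arguments maxmixed {R} T _ _.

(* Main.v *)
Require Import Defs.
From HB Require Import structures.
From mathcomp Require Import all_boot all_order all_algebra.
From mathcomp Require Import reals exp.
From mathcomp.real_closed Require Import complex.
From mathcomp Require Import ring lra.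
From Stdlib Require Import FunctionalExtensionality.
Import Order.TTheory GRing.Theory Num.Theory.
Set Implicit Arguments.
Unset Strict Implicit.
Unset Printing Implicit Defensive.
Local Open Scope ring_scope.

Section Scalar.
Variable R : realType.

Definition gx (x : R) : R := if x == 0 then 0 else - (x * ln x).

Lemma ln2_gt0 : 0 < ln (2 : R).
Proof. by apply: ln_gt0; lra. Qed.

Lemma xlog2x_gx (x : R) : - xlog2x x = gx x / ln 2.
Proof.
rewrite /xlog2x /gx /log2; case: eqP => _; first by rewrite oppr0 mul0r.
by rewrite mulNr mulrA.
Qed.

Lemma ln_sub1 (y : R) : 0 < y -> ln y <= y - 1.
Proof.
move=> y0; have := @le_ln1Dx R (y - 1).
have -> : 1 + (y - 1) = y by ring.
apply; lra.
Qed.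

Lemma ln_sub1_eq (y : R) : 0 < y -> ln y = y - 1 -> y = 1.
Proof.
move=> y0 e; apply/eqP; apply: contraT => y1.
have lny0 : ln y != 0 by rewrite ln_eq0.
have := expR_gt1Dx lny0; rewrite lnK ?posrE // e; lra.
Qed.

Lemma pt_slack (x k : R) : 0 < k -> 0 < x ->
  0 <= x * ln k - x + k^-1 - gx x /\
  (x * ln k - x + k^-1 - gx x = 0 -> x = k^-1).
Proof.
move=> k0 x0.
have kx0 : 0 < k * x by apply: mulr_gt0.
set y := (k * x)^-1.
have y0 : 0 < y by rewrite invr_gt0.
have lny : ln y = - (ln k + ln x).
  by rewrite /y lnV ?posrE // lnM ?posrE.
have E : x * ln k - x + k^-1 - gx x = x * (y - 1 - ln y).
  rewrite /gx (negbTE (lt0r_neq0 x0)) lny /y.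
  by field; rewrite ?lt0r_neq0.
rewrite E; split.
  apply: mulr_ge0; first lra.
  have := @ln_sub1 y y0; lra.
move=> /eqP; rewrite mulf_eq0 (negbTE (lt0r_neq0 x0)) /= => /eqP e.
have : y = 1 by apply: (@ln_sub1_eq y) => //; lra.
rewrite /y => /(congr1 (fun t => t^-1)); rewrite invrK invr1 => kx1.
apply: (mulfI (lt0r_neq0 k0)); by rewrite kx1 divff // lt0r_neq0.
Qed.

Lemma sum_ind (n : nat) (P : pred 'I_n) :
  \sum_i ((P i)%:R : R) = #|P|%:R.
Proof.
rewrite (eq_bigr (fun i => if P i then (1:R) else 0)) => [|i _]; last by case: (P i).
rewrite -big_mkcond /= sumr_const.
by [].
Qed.

Lemma G1 (n : nat) (x : 'I_n -> R) (k : nat) : (0 < k)%N ->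
  (forall i, 0 <= x i) -> \sum_i x i = 1 ->
  (#|[pred i | x i != 0%R]| <= k)%N -> \sum_i gx (x i) <= ln k%:R.
Proof.
move=> k0 xge0 xs1 card.
have k0' : 0 < (k%:R : R) by rewrite ltr0n.
have step : forall i, gx (x i) <= x i * ln k%:R - x i + ((x i != 0)%:R) / k%:R.
  move=> i; have [->|nz] := eqVneq (x i) 0.
    rewrite /gx eqxx /= mulr0n !mul0r; lra.
  have xp : 0 < x i by rewrite lt0r nz xge0.
  have [h _] := @pt_slack (x i) k%:R k0' xp; rewrite /= mul1r; lra.
apply: le_trans (ler_sum _ (fun i _ => step i)) _.
rewrite !big_split /= -!mulr_suml sumrN xs1 mul1r sum_ind.
have : (#|[pred i | x i != 0]|%:R : R) <= k%:R by rewrite ler_nat.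
move=> h.
have : #|[pred i | x i != 0]|%:R / (k%:R : R) <= 1.
  by rewrite ler_pdivrMr // mul1r.
lra.
Qed.

Lemma G2 (n : nat) (x : 'I_n -> R) : (0 < n)%N ->
  (forall i, 0 <= x i) -> \sum_i x i = 1 ->
  ln n%:R <= \sum_i gx (x i) -> forall i, x i = n%:R^-1.
Proof.
move=> n0 xge0 xs1 H.
have n0' : 0 < (n%:R : R) by rewrite ltr0n.
pose s i := x i * ln n%:R - x i + n%:R^-1 - gx (x i).
have sge0 : forall i, 0 <= s i.
  move=> i; rewrite /s; have [->|nz] := eqVneq (x i) 0.
    by rewrite /gx eqxx mul0r !subrr add0r subr0 invr_ge0 ltW.
  have xp : 0 < x i by rewrite lt0r nz xge0.
  by have [h _] := @pt_slack (x i) n%:R n0' xp.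
have ssum : \sum_i s i = ln n%:R - \sum_i gx (x i).
  rewrite /s !big_split /= -mulr_suml !sumrN xs1 mul1r sumr_const card_ord.
  rewrite -[n%:R^-1 *+ n]mulr_natr mulVf ?lt0r_neq0 //; ring.
have s0 : \sum_i s i = 0.
  apply/eqP; rewrite eq_le; apply/andP; split; first by rewrite ssum; lra.
  by apply: sumr_ge0 => i _; exact: sge0.
move=> i.
have si0 : s i = 0.
  move/eqP: s0; rewrite psumr_eq0; last by move=> j _; exact: sge0.
  by move=> /allP /(_ i (mem_index_enum _)) /eqP.
have [xi0|nz] := eqVneq (x i) 0.
  move: si0; rewrite /s xi0 /gx eqxx mul0r !subrr add0r subr0 => /eqP.
  by rewrite invr_eq0 (negbTE (lt0r_neq0 n0')).
have xp : 0 < x i by rewrite lt0r nz xge0.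
by have [_ h] := @pt_slack (x i) n%:R n0' xp; apply: h.
Qed.

End Scalar.
Local Open Scope sesquilinear_scope.
Section Spec.
Variable R : realType.
Local Notation C := R[i].

Lemma cp_sim n (P B : 'M[C]_n) : P \in unitmx ->
  char_poly (invmx P *m B *m P) = char_poly B.
Proof.
move=> Pu; rewrite /char_poly /char_poly_mx.
have -> : 'X%:M - map_mx polyC (invmx P *m B *m P) =
   map_mx polyC (invmx P) *m ('X%:M - map_mx polyC B) *m map_mx polyC P.
  rewrite !map_mxM mulmxBr mulmxBl -!mulmxA; congr (_ - _).
  rewrite mul_scalar_mx -scalemxAr -map_mxM mulVmx // map_mx1.
  by rewrite scalemx1.
rewrite det_mulmx det_mulmx !det_map_mx mulrC mulrA -rmorphM /= -det_mulmx mulmxV //.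
by rewrite det1 mul1r.
Qed.

Lemma ent_spec n (A : 'M[C]_n) : A \is normalmx ->
  \sum_(l <- eigenvalues A) xlog2x (complex.Re l) =
  \sum_i xlog2x (complex.Re (spectral_diag A 0 i)).
Proof.
move=> /orthomx_spectralP Ae.
rewrite /eigenvalues; case: closed_field_poly_normal => rs /= e.
move: e; rewrite (monicP (char_poly_monic A)) scale1r => e.
have : perm_eq rs [seq spectral_diag A 0 i | i <- enum 'I_n].
  apply: prod_XsubC_eq; rewrite -e {1}Ae cp_sim ?spectral_unit //.
  rewrite char_poly_trig ?diag_mx_is_trig // big_map big_enum /=.
  by apply: eq_bigr => i _; rewrite mxE eqxx mulr1n.
move=> pe; rewrite (perm_big _ pe) big_map big_enum /=. by [].
Qed.


Lemma diag_eq n (A : 'M[C]_n) : A \is normalmx ->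
  diag_mx (spectral_diag A) = spectralmx A *m A *m invmx (spectralmx A).
Proof.
move=> /orthomx_spectralP; set P := spectralmx A; set D := spectral_diag A => Ae.
have Pu : P \in unitmx by exact: spectral_unit.
by rewrite [X in _ = _ *m X *m _]Ae !mulmxA mulmxV // mul1mx mulmxK.
Qed.

Lemma D_entry n (A : 'M[C]_n) i : A \is normalmx ->
  spectral_diag A 0 i =
  (row i (spectralmx A) *m A *m (row i (spectralmx A))^t*) 0 0.
Proof.
move=> An; have := @diag_eq n A An.
rewrite invmx_unitary ?spectral_unitarymx // => /matrixP /(_ i i).
rewrite mxE eqxx mulr1n => ->.
rewrite !mxE; apply: eq_bigr => k _; rewrite !mxE; congr (_ * _).
by apply: eq_bigr => j _; rewrite !mxE.
Qed.

Definition psd n (A : 'M[C]_n) := forall v : 'rV_n, 0 <= (v *m A *m v^t*) 0 0.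
Arguments psd {n}.

Lemma D_ge0 n (A : 'M[C]_n) i : A \is normalmx -> psd A ->
  0 <= spectral_diag A 0 i.
Proof. by move=> An Ap; rewrite (@D_entry n A i An). Qed.

Lemma D_sum n (A : 'M[C]_n) : A \is normalmx -> \sum_i spectral_diag A 0 i = \tr A.
Proof.
move=> /orthomx_spectralP; set P := spectralmx A; set D := spectral_diag A => Ae.
have Pu : P \in unitmx by exact: spectral_unit.
by rewrite [in RHS]Ae mxtrace_mulC mulmxA mulmxV // mul1mx mxtrace_diag.
Qed.

Lemma rank_diag_ge n (d : 'rV[C]_n) :
  (#|[pred i | d 0%R i != 0%R]| <= \rank (diag_mx d))%N.
Proof.
set S := [pred i | d 0 i != 0].
pose f := fun j : 'I_#|S| => enum_val j.
pose B := rowsub f (1%:M : 'M[C]_n).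
have E : B *m diag_mx d *m B^T = diag_mx (\row_j d 0 (f j)).
  have T : forall (X : 'M[C]_(#|S|, n)) (Y : 'M[C]_(#|S|, n)), X *m Y^T = (Y *m X^T)^T.
    by move=> X Y; rewrite trmx_mul !trmxK.
  apply/matrixP => j j'.
  rewrite /B -rowsubE T -rowsubE !mxE.
  rewrite (inj_eq enum_val_inj).
  by case: eqP => [->|] //.
have : (\rank (B *m diag_mx d *m B^T) <= \rank (diag_mx d))%N.
  by apply: leq_trans (mxrankM_maxl _ _) (mxrankM_maxr _ _).
rewrite E mxrank_unit //.
rewrite unitmxE det_diag unitfE; apply/prodf_neq0 => j _.
rewrite mxE; have := enum_valP j; by rewrite /S inE.
Qed.

Lemma D_rank n (A : 'M[C]_n) : A \is normalmx ->
  (#|[pred i | spectral_diag A 0%R i != 0%R]| <= \rank A)%N.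
Proof.
move=> An; apply: leq_trans (@rank_diag_ge n (spectral_diag A)) _.
rewrite diag_eq //; apply: leq_trans (mxrankM_maxl _ _) (mxrankM_maxr _ _).
Qed.


Lemma D_scalar n (A : 'M[C]_n) (c : C) : A \is normalmx ->
  (forall i, spectral_diag A 0 i = c) -> A = c%:M.
Proof.
move=> /orthomx_spectralP; set P := spectralmx A; set D := spectral_diag A => Ae Dc.
have Pu : P \in unitmx by exact: spectral_unit.
have Dm : diag_mx D = c%:M.
  by apply/matrixP => i j; rewrite !mxE Dc.
rewrite Dm in Ae.
by rewrite Ae mul_mx_scalar -scalemxAl mulVmx // scalemx1.
Qed.

Lemma D_scalar_rev n (A : 'M[C]_n) (c : C) : A \is normalmx ->
  A = c%:M -> forall i, spectral_diag A 0 i = c.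
Proof.
move=> An Ac i; have := @diag_eq n A An; rewrite [X in _ = _ *m X *m _]Ac.
have Pu : spectralmx A \in unitmx by exact: spectral_unit.
rewrite mul_mx_scalar -scalemxAl mulmxV // scalemx1 => /matrixP /(_ i i).
by rewrite !mxE eqxx !mulr1n.
Qed.

Lemma D_proj n (A : 'M[C]_n) (c : C) : A \is normalmx ->
  A *m A = c *: A -> forall i, spectral_diag A 0 i * spectral_diag A 0 i = c * spectral_diag A 0 i.
Proof.
move=> An AA i.
have Pu : spectralmx A \in unitmx by exact: spectral_unit.
have : diag_mx (spectral_diag A) *m diag_mx (spectral_diag A) = c *: diag_mx (spectral_diag A).
  rewrite diag_eq // !mulmxA mulmxKV // -(mulmxA _ A A) AA.
  by rewrite -scalemxAr -scalemxAl.
rewrite mulmx_diag => /matrixP /(_ i i); by rewrite !mxE eqxx !mulr1n.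
Qed.

Lemma herm_normal n (A : 'M[C]_n) : A^t* = A -> A \is normalmx.
Proof. by move=> h; apply/normalmxP; rewrite h. Qed.

Lemma natVC (n : nat) : (0 < n)%N -> (n%:R^-1 : C) = ((n%:R^-1 : R)%:C)%C.
Proof.
move=> n0; rewrite [RHS]rmorphV ?unitfE ?pnatr_eq0 -?lt0n //.
by rewrite rmorph_nat.
Qed.

Definition ent n (A : 'M[C]_n) : R :=
  - \sum_(l <- eigenvalues A) xlog2x (complex.Re l).

Lemma ge0C (z : C) : 0 <= z -> z = ((complex.Re z)%:C)%C /\ 0 <= complex.Re z.
Proof.
rewrite lecE; case: z => re im /= /andP [/eqP -> h]; split => //.
Qed.

Lemma ent_gx n (A : 'M[C]_n) : A \is normalmx ->
  ent A = (\sum_i gx (complex.Re (spectral_diag A 0 i))) / ln 2.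
Proof.
move=> An; rewrite /ent ent_spec // -sumrN mulr_suml; apply: eq_bigr => i _.
exact: xlog2x_gx.
Qed.

Lemma x_props n (A : 'M[C]_n) : A \is normalmx -> psd A -> \tr A = 1 ->
  let x := fun i => complex.Re (spectral_diag A 0 i) in
  [/\ forall i, spectral_diag A 0 i = ((x i)%:C)%C, forall i, 0 <= x i &
      \sum_i x i = 1].
Proof.
move=> An Ap At x.
have H : forall i, spectral_diag A 0 i = ((x i)%:C)%C /\ 0 <= x i.
  by move=> i; apply: ge0C; apply: D_ge0.
split; [by move=> i; case: (H i) | by move=> i; case: (H i)|].
apply: (@complexI R); rewrite rmorph_sum rmorph1 /= -At -D_sum //.
by apply: eq_bigr => i _; case: (H i).
Qed.

Lemma ent_le n (A : 'M[C]_n) (k : nat) : A \is normalmx -> psd A -> \tr A = 1 ->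
  (0 < k)%N -> (\rank A <= k)%N -> ent A <= log2 k%:R.
Proof.
move=> An Ap At k0 rk.
have [xe xge0 xs] := x_props An Ap At.
rewrite ent_gx // /log2 ler_pM2r ?invr_gt0 ?ln2_gt0 //.
apply: G1 => //; apply: leq_trans _ (leq_trans (D_rank An) rk).
apply: subset_leq_card; apply/subsetP => i; rewrite !inE xe.
by apply: contra => /eqP ->.
Qed.

Lemma ent_eq n (A : 'M[C]_n) : A \is normalmx -> psd A -> \tr A = 1 ->
  (0 < n)%N -> log2 n%:R <= ent A -> A = (n%:R^-1)%:M.
Proof.
move=> An Ap At n0 h.
have [xe xge0 xs] := x_props An Ap At.
move: h; rewrite ent_gx // /log2 ler_pM2r ?invr_gt0 ?ln2_gt0 // => h.
have := G2 n0 xge0 xs h => xv.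
apply: D_scalar => // i; rewrite xe xv.
by rewrite rmorphV ?unitfE ?pnatr_eq0 -?lt0n // rmorph_nat.
Qed.

Lemma ent_scalar n (A : 'M[C]_n) : (0 < n)%N -> A = (n%:R^-1)%:M -> ent A = log2 n%:R.
Proof.
move=> n0 Ae.
have An : A \is normalmx by apply/normalmxP; rewrite Ae; rewrite !mul_mx_scalar !mul_scalar_mx.
rewrite /ent ent_spec //.
have E : forall i, complex.Re (spectral_diag A 0 i) = n%:R^-1.
  by move=> i; rewrite (D_scalar_rev An Ae) natVC.
under eq_bigr => i _ do rewrite E.
have nz : (n%:R : R) != 0 by rewrite pnatr_eq0 -lt0n.
rewrite /= sumr_const card_ord /xlog2x invr_eq0 (negbTE nz).
rewrite /log2 lnV ?posrE ?invr_gt0 ?ltr0n // -mulr_natr.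
have l2 : ln (2:R) != 0 by rewrite lt0r_neq0 ?ln2_gt0.
by field; rewrite nz l2.
Qed.

Lemma ent_proj n (A : 'M[C]_n) (b : nat) : A \is normalmx -> psd A -> \tr A = 1 ->
  (0 < b)%N -> A *m A = (b%:R^-1) *: A -> ent A = log2 b%:R.
Proof.
move=> An Ap At b0 AA.
have [xe xge0 xs] := x_props An Ap At.
have bC : (b%:R^-1 : C) = ((b%:R^-1 : R)%:C)%C.
  by rewrite rmorphV ?unitfE ?pnatr_eq0 -?lt0n // rmorph_nat.
have xx : forall i, complex.Re (spectral_diag A 0 i) * complex.Re (spectral_diag A 0 i)
                = b%:R^-1 * complex.Re (spectral_diag A 0 i).
  move=> i; have := D_proj An AA i; rewrite xe bC -!rmorphM /=.
  by move/(@complexI R).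
rewrite /ent ent_spec // -sumrN.
have nz : (b%:R : R) != 0 by rewrite pnatr_eq0 -lt0n.
have E : forall i, - xlog2x (complex.Re (spectral_diag A 0 i)) =
   complex.Re (spectral_diag A 0 i) * log2 b%:R.
  move=> i; have := xx i; set y := complex.Re _ => yy.
  rewrite /xlog2x; case: eqP => [->|y0]; first by rewrite oppr0 mul0r.
  have yb : y = b%:R^-1.
    by apply: (mulIf (introN eqP y0)); rewrite yy.
  by rewrite yb /log2 lnV ?posrE ?ltr0n // mulNr mulrN opprK.
under eq_bigr => i _ do rewrite E.
by rewrite -mulr_suml xs mul1r.
Qed.


Lemma sum_enum (T : finType) (F : T -> C) :
  \sum_(i < #|T|) F (enum_val i) = \sum_t F t.
Proof. by rewrite -(big_enum_val (A := T)); apply: eq_bigl => x; rewrite inE. Qed.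

Definition Wmx (T K : finType) (psi : T * K -> C) : 'M[C]_(#|T|, #|K|) :=
  \matrix_(i, j) psi (enum_val i, enum_val j).

Lemma mx_of_pt (T K : finType) (psi : T * K -> C) :
  mx_of (ptrace (fun x y => psi x * (psi y)^*)) = Wmx psi *m (Wmx psi)^t*.
Proof.
apply/matrixP => i j; rewrite !mxE /ptrace -sum_enum.
by apply: eq_bigr => k _; rewrite !mxE.
Qed.

Lemma WW_herm m n (W : 'M[C]_(m, n)) : (W *m W^t*)^t* = W *m W^t*.
Proof. by rewrite trmx_mul map_mxM trmxCK. Qed.

Lemma WW_psd m n (W : 'M[C]_(m, n)) : psd (W *m W^t*).
Proof.
move=> v; rewrite mulmxA.
have -> : v *m W *m W^t* *m v^t* = (v *m W) *m (v *m W)^t*.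
  by rewrite trmx_mul map_mxM !mulmxA.
rewrite mxE; apply: sumr_ge0 => j _; rewrite !mxE; exact: mul_conjC_ge0.
Qed.

Lemma WW_rank m n (W : 'M[C]_(m, n)) : (\rank (W *m W^t*) <= n)%N.
Proof. exact: leq_trans (mxrankM_maxl _ _) (rank_leq_col _). Qed.

Lemma pt_normal (T K : finType) (psi : T * K -> C) :
  mx_of (ptrace (fun x y => psi x * (psi y)^*)) \is normalmx.
Proof. by rewrite mx_of_pt; apply: herm_normal; exact: WW_herm. Qed.

Lemma pt_psd (T K : finType) (psi : T * K -> C) :
  psd (mx_of (ptrace (fun x y => psi x * (psi y)^*))).
Proof. by rewrite mx_of_pt; exact: WW_psd. Qed.

Lemma pt_rank (T K : finType) (psi : T * K -> C) :
  (\rank (mx_of (ptrace (fun x y => (psi x * (psi y)^*)%R))) <= #|K|)%N.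
Proof. by rewrite mx_of_pt; exact: WW_rank. Qed.

Lemma tr_mx_of (T : finType) (rho : op R T) : \tr (mx_of rho) = \sum_t rho t t.
Proof. by rewrite /mxtrace -sum_enum; apply: eq_bigr => i _; rewrite mxE. Qed.

Lemma mx_of_maxmixed (T : finType) : mx_of (maxmixed T) = (#|T|%:R^-1 : C)%:M.
Proof.
apply/matrixP => i j; rewrite !mxE /maxmixed (inj_eq enum_val_inj).
by case: eqP => _; rewrite ?mul1r ?mul0r ?mulr1n ?mulr0n.
Qed.

Lemma entropy_maxmixed (T : finType) : (0 < #|T|)%N ->
  entropy (maxmixed T) = log2 (#|T|%:R : R).
Proof. by move=> T0; apply: ent_scalar => //; rewrite mx_of_maxmixed. Qed.

End Spec.

Section ChoiComp.
Variable R : realType.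
Local Notation C := R[i].
Variables (a b c d : nat) (U : 'I_c * 'I_d -> 'I_a * 'I_b -> C).
Hypotheses (a0 : (0 < a)%N) (b0 : (0 < b)%N) (c0 : (0 < c)%N) (d0 : (0 < d)%N).
Hypothesis abcd : (a * b = c * d)%N.
Hypothesis HU : unitary U.

Let N : C := ((a * b)%N%:R)^-1.

Lemma sum_delta (T : finType) (x : T) (F : T -> C) :
  \sum_i F i * (x == i)%:R = F x.
Proof.
rewrite (bigD1 x) //= eqxx mulr1 big1 ?addr0 // => i ne.
by rewrite eq_sym (negbTE ne) mulr0.
Qed.

Lemma sum_pair (T K : finType) (F : T * K -> C) :
  \sum_p F p = \sum_t \sum_k F (t, k).
Proof. by rewrite pair_bigA; apply: eq_bigr => -[]. Qed.

Definition uu (x : 'I_a * 'I_b * 'I_c * 'I_d) : C :=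
  let: (al, be, ga, de) := x in U (ga, de) (al, be).

Lemma nat_gt0C (n : nat) : (0 < n)%N -> (n%:R : C) != 0.
Proof. by move=> n0; rewrite pnatr_eq0 -lt0n. Qed.

Lemma choi_vecE x : choi_vec U x = uu x * ((sqrtC a%:R)^-1 * (sqrtC b%:R)^-1).
Proof.
case: x => [[[al be] ga] de] /=; rewrite /Phi /=.
rewrite (eq_bigr (fun al'' => (\sum_be'' (U (ga,de) (al'',be'') *
     ((sqrtC a%:R)^-1 * (sqrtC b%:R)^-1) * (be == be'')%:R)) * (al == al'')%:R)).
  by rewrite sum_delta sum_delta.
move=> al'' _; rewrite mulr_suml; apply: eq_bigr => be'' _ /=.
by rewrite !mulrA; ring.
Qed.

Lemma choiF : choi U = fun x y => N * (uu x * (uu y)^*).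
Proof.
apply: functional_extensionality => x; apply: functional_extensionality => y.
rewrite /choi !choi_vecE rmorphM /=.
have s0 : 0 <= (sqrtC (a%:R : C))^-1 / sqrtC (b%:R : C).
  by rewrite mulr_ge0 // invr_ge0 sqrtC_ge0 ler0n.
rewrite (geC0_conj s0).
have sa : sqrtC (a%:R : C) != 0 by rewrite sqrtC_eq0 nat_gt0C.
have sb : sqrtC (b%:R : C) != 0 by rewrite sqrtC_eq0 nat_gt0C.
rewrite /N natrM -[in RHS](sqrtCK (a%:R : C)) -[in RHS](sqrtCK (b%:R : C)).
by field; rewrite sa sb.
Qed.

Lemma V1 t t' : \sum_ga \sum_de U (ga, de) t * (U (ga, de) t')^* = (t == t')%:R.
Proof.
rewrite pair_bigA /=.
have := HU.1 t t' => /(congr1 Num.conj); rewrite rmorph_sum /=.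
rewrite (_ : (t == t')%:R^* = (t == t')%:R); last by case: (t == t'); rewrite ?conjC1 ?conjC0.
move=> <-; apply: eq_bigr => -[ga de] _; rewrite rmorphM /= conjCK mulrC. by [].
Qed.

Lemma V2 k k' : \sum_al \sum_be U k (al, be) * (U k' (al, be))^* = (k == k')%:R.
Proof.
rewrite pair_bigA /= -HU.2; apply: eq_bigr => -[al be] _. by [].
Qed.


Lemma sum3M (I J K : finType) (x : C) (F : I -> J -> K -> C) :
  \sum_i \sum_j \sum_k x * F i j k = x * \sum_i \sum_j \sum_k F i j k.
Proof.
rewrite mulr_sumr; apply: eq_bigr => i _; rewrite mulr_sumr.
by apply: eq_bigr => j _; rewrite mulr_sumr.
Qed.

Lemma sum2M (I J : finType) (x : C) (F : I -> J -> C) :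
  \sum_i \sum_j x * F i j = x * \sum_i \sum_j F i j.
Proof. by rewrite mulr_sumr; apply: eq_bigr => i _; rewrite mulr_sumr. Qed.

Lemma Nab : N * (b%:R : C) = (a%:R)^-1.
Proof. by rewrite /N natrM; field; rewrite !nat_gt0C. Qed.

Lemma rhoA : rho_A U = maxmixed 'I_a.
Proof.
apply: functional_extensionality => al; apply: functional_extensionality => al'.
rewrite /rho_A /ptrace /relabel choiF /maxmixed card_ord.
rewrite !sum_pair /= sum3M.
under eq_bigr => be _ do rewrite V1.
rewrite (eq_bigr (fun=> (al == al')%:R)) => [|be _]; last by rewrite xpair_eqE eqxx andbT.
by rewrite sumr_const card_ord -[_ *+ b]mulr_natr mulrCA Nab mulrC.
Qed.


Lemma Ncd : N * (d%:R : C) = (c%:R)^-1.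
Proof. by rewrite /N abcd natrM; field; rewrite !nat_gt0C. Qed.

Lemma Ndc : N * (c%:R : C) = (d%:R)^-1.
Proof. by rewrite /N abcd natrM; field; rewrite !nat_gt0C. Qed.

Lemma rot3 (I J K : finType) (F : I -> J -> K -> C) :
  \sum_i \sum_j \sum_k F i j k = \sum_j \sum_k \sum_i F i j k.
Proof.
rewrite exchange_big; apply: eq_bigr => j _; rewrite exchange_big. by [].
Qed.

Lemma rhoC : rho_C U = maxmixed 'I_c.
Proof.
apply: functional_extensionality => ga; apply: functional_extensionality => ga'.
rewrite /rho_C /ptrace /relabel choiF /maxmixed card_ord.
rewrite !sum_pair /= sum3M -rot3.
under eq_bigr => de _ do rewrite V2.
rewrite (eq_bigr (fun=> (ga == ga')%:R)) => [|de _]; last by rewrite xpair_eqE eqxx andbT.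
by rewrite sumr_const card_ord -[_ *+ d]mulr_natr mulrCA Ncd mulrC.
Qed.

Lemma rhoD : rho_D U = maxmixed 'I_d.
Proof.
apply: functional_extensionality => de; apply: functional_extensionality => de'.
rewrite /rho_D /ptrace /relabel choiF /maxmixed card_ord.
rewrite !sum_pair /= sum3M -rot3.
under eq_bigr => ga _ do rewrite V2.
rewrite (eq_bigr (fun=> (de == de')%:R)) => [|ga _]; last by rewrite xpair_eqE eqxx.
by rewrite sumr_const card_ord -[_ *+ c]mulr_natr mulrCA Ndc mulrC.
Qed.

Lemma rhoCD : rho_CD U = maxmixed ('I_c * 'I_d)%type.
Proof.
apply: functional_extensionality => -[ga de]; apply: functional_extensionality => -[ga' de'].
rewrite /rho_CD /ptrace /relabel choiF /maxmixed card_prod !card_ord.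
rewrite !sum_pair /= sum2M V2 /N abcd mulrC. by [].
Qed.

Lemma tot : \sum_al \sum_be \sum_ga \sum_de
   N * (U (ga, de) (al, be) * (U (ga, de) (al, be))^*) = 1.
Proof.
under eq_bigr => al _ do under eq_bigr => be _ do rewrite sum2M V1 eqxx mulr1.
rewrite sumr_const sumr_const !card_ord -mulrnA -mulr_natr /N.
by rewrite mulnC mulVf // nat_gt0C // muln_gt0 a0 b0.
Qed.

Lemma trAC : \tr (mx_of (rho_AC U)) = 1.
Proof.
rewrite tr_mx_of /rho_AC /ptrace /relabel choiF sum_pair.
under eq_bigr => al _ do under eq_bigr => ga _ do rewrite sum_pair /=.
rewrite -tot; apply: eq_bigr => al _; exact: exchange_big.
Qed.

Lemma trAD : \tr (mx_of (rho_AD U)) = 1.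
Proof.
rewrite tr_mx_of /rho_AD /ptrace /relabel choiF sum_pair.
under eq_bigr => al _ do under eq_bigr => de _ do rewrite sum_pair /=.
rewrite -tot; apply: eq_bigr => al _; exact: rot3.
Qed.

Lemma trACD : \tr (mx_of (rho_ACD U)) = 1.
Proof.
rewrite tr_mx_of /rho_ACD /ptrace /relabel choiF sum_pair.
under eq_bigr => al _ do rewrite sum_pair /=.
rewrite -tot; apply: eq_bigr => al _; symmetry; exact: rot3.
Qed.


Lemma choiE' x y : choi_vec U x * (choi_vec U y)^* = N * (uu x * (uu y)^*).
Proof. by have := congr1 (fun f => f x y) choiF. Qed.

Definition psiACD (p : ('I_a * ('I_c * 'I_d)) * 'I_b) : C :=
  choi_vec U (let: ((al, (ga, de)), be) := p in (al, be, ga, de)).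

Lemma Nba : N * (a%:R : C) = (b%:R)^-1.
Proof. by rewrite /N natrM; field; rewrite !nat_gt0C. Qed.

Lemma WACD : (Wmx psiACD)^t* *m Wmx psiACD = (b%:R^-1 : C)%:M.
Proof.
apply/matrixP => i j; rewrite !mxE.
rewrite (eq_bigr (fun l => psiACD (enum_val l, enum_val j) * (psiACD (enum_val l, enum_val i))^*));
  last by move=> l _; rewrite !mxE mulrC.
rewrite (sum_enum (fun x => psiACD (x, enum_val j) * (psiACD (x, enum_val i))^*)) sum_pair.
under eq_bigr => al _ do rewrite sum_pair.
rewrite /psiACD.
under eq_bigr => al _ do under eq_bigr => ga _ do under eq_bigr => de _ do rewrite choiE' /=.
rewrite sum3M.
under eq_bigr => al _ do rewrite V1.
rewrite (eq_bigr (fun=> (enum_val j == enum_val i)%:R)) => [|al _]; last by rewrite xpair_eqE eqxx.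
rewrite sumr_const card_ord -[_ *+ a]mulr_natr mulrCA Nba (inj_eq enum_val_inj) eq_sym.
by case: (i == j); rewrite ?mul1r ?mul0r ?mulr1n ?mulr0n.
Qed.

Lemma projACD : mx_of (rho_ACD U) *m mx_of (rho_ACD U) = (b%:R^-1 : C) *: mx_of (rho_ACD U).
Proof.
have -> : mx_of (rho_ACD U) = Wmx psiACD *m (Wmx psiACD)^t* := mx_of_pt psiACD.
rewrite mulmxA -(mulmxA (Wmx psiACD)) WACD mul_mx_scalar -scalemxAl scalemxAl. by [].
Qed.


Lemma sum_delta2 (T : finType) (F : T -> T -> C) (k : C) :
  \sum_i \sum_j F i j * (k * (i == j)%:R) = k * \sum_i F i i.
Proof.
rewrite mulr_sumr; apply: eq_bigr => i _.
rewrite (eq_bigr (fun j => (k * F i j) * (i == j)%:R)) ?sum_delta // => j _.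
by rewrite mulrA (mulrC k).
Qed.

Lemma residual (sigma : op R 'I_a) :
  rho_AC U = maxmixed ('I_a * 'I_c)%type -> density sigma ->
  residual_channel U sigma = maxmixed 'I_c.
Proof.
move=> hAC [_ trs].
have K : forall al ga al' ga',
  \sum_be \sum_de U (ga, de) (al, be) * (U (ga', de) (al', be))^* =
  (a * b)%:R * (((al, ga) == (al', ga'))%:R / (a * c)%:R).
  move=> al ga al' ga'.
  have := congr1 (fun f => f (al, ga) (al', ga')) hAC.
  rewrite /= /rho_AC /ptrace /relabel choiF sum_pair /= sum2M /maxmixed card_prod !card_ord.
  move=> <-; rewrite mulrA /N mulfV ?mul1r // nat_gt0C // muln_gt0 a0 b0.
  by [].
apply: functional_extensionality => ga; apply: functional_extensionality => ga'.
rewrite /residual_channel /ptrace /conj_by /tensor_op /maxmixed card_ord.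
transitivity (\sum_de \sum_al \sum_be \sum_al' sigma al al' / b%:R *
                 (U (ga, de) (al, be) * (U (ga', de) (al', be))^*)).
  apply: eq_bigr => de _; rewrite sum_pair; apply: eq_bigr => al _.
  apply: eq_bigr => be _; rewrite sum_pair; apply: eq_bigr => al' _ /=.
  rewrite (eq_bigr (fun be' => (sigma al al' / b%:R * (U (ga, de) (al, be) *
             (U (ga', de) (al', be'))^*)) * (be == be')%:R)); first by rewrite sum_delta.
  move=> be' _ /=; case: (be == be'); rewrite ?mulr1n ?mulr0n; ring.
rewrite rot3; under eq_bigr => al _ do rewrite -rot3.
transitivity (\sum_al \sum_al' sigma al al' * (((c%:R)^-1 * (ga == ga')%:R) * (al == al')%:R)).
  apply: eq_bigr => al _; apply: eq_bigr => al' _.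
  rewrite sum2M K xpair_eqE.
  have := nat_gt0C a0; have := nat_gt0C b0; have := nat_gt0C c0.
  case: (al == al'); case: (ga == ga') => /= ? ? ?; rewrite !natrM;
    rewrite ?mulr1n ?mulr0n; field; do ! (apply/andP; split) => //.
by rewrite sum_delta2 trs mulr1 card_ord mulrC.
Qed.


Definition psiAC (p : ('I_a * 'I_c) * ('I_b * 'I_d)) : C :=
  choi_vec U (let: ((al, ga), (be, de)) := p in (al, be, ga, de)).
Definition psiAD (p : ('I_a * 'I_d) * ('I_b * 'I_c)) : C :=
  choi_vec U (let: ((al, de), (be, ga)) := p in (al, be, ga, de)).

Lemma mxAC : mx_of (rho_AC U) = mx_of (ptrace (fun x y => psiAC x * (psiAC y)^*)).
Proof. by []. Qed.
Lemma mxAD : mx_of (rho_AD U) = mx_of (ptrace (fun x y => psiAD x * (psiAD y)^*)).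
Proof. by []. Qed.
Lemma mxACD : mx_of (rho_ACD U) = mx_of (ptrace (fun x y => psiACD x * (psiACD y)^*)).
Proof. by []. Qed.

Lemma log2M (m n : nat) : (0 < m)%N -> (0 < n)%N ->
  log2 ((m * n)%N%:R : R) = log2 (m%:R : R) + log2 (n%:R : R).
Proof.
move=> m0 n0; rewrite /log2 natrM lnM ?posrE ?ltr0n // mulrDl. by [].
Qed.

Lemma mx_of_inj (T : finType) (r1 r2 : op R T) : mx_of r1 = mx_of r2 -> r1 = r2.
Proof.
move=> /matrixP E; apply: functional_extensionality => x; apply: functional_extensionality => y.
have := E (enum_rank x) (enum_rank y); rewrite !mxE !enum_rankK. by [].
Qed.

Lemma main_sec :
  I3 U = - 2 * log2 (minn (minn a b) (minn c d))%:R ->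
  (a = minn (minn a b) (minn c d) \/ c = minn (minn a b) (minn c d)) ->
  [/\ rho_AC U = maxmixed ('I_a * 'I_c)%type,
      I_AC U = 0 &
      forall sigma : op R 'I_a, density sigma ->
        residual_channel U sigma = maxmixed 'I_c].
Proof.
move=> hI3 hm.
have SA : entropy (rho_A U) = log2 (a%:R : R).
  by rewrite rhoA entropy_maxmixed card_ord.
have SC : entropy (rho_C U) = log2 (c%:R : R).
  by rewrite rhoC entropy_maxmixed card_ord.
have SD : entropy (rho_D U) = log2 (d%:R : R).
  by rewrite rhoD entropy_maxmixed card_ord.
have SCD : entropy (rho_CD U) = log2 (c%:R : R) + log2 (d%:R : R).
  by rewrite rhoCD entropy_maxmixed card_prod !card_ord ?muln_gt0 ?c0 // log2M.
have SACD : entropy (rho_ACD U) = log2 (b%:R : R).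
  apply: ent_proj => //; rewrite ?trACD ?projACD // mxACD.
    exact: pt_normal.
  exact: pt_psd.
have lab : log2 (a%:R : R) + log2 (b%:R : R) = log2 (c%:R : R) + log2 (d%:R : R).
  by rewrite -!log2M // abcd.
have nAC : mx_of (rho_AC U) \is normalmx by rewrite mxAC; exact: pt_normal.
have pAC : psd (mx_of (rho_AC U)) by rewrite mxAC; exact: pt_psd.
have nAD : mx_of (rho_AD U) \is normalmx by rewrite mxAD; exact: pt_normal.
have pAD : psd (mx_of (rho_AD U)) by rewrite mxAD; exact: pt_psd.
have SAC_le : entropy (rho_AC U) <= log2 (a%:R : R) + log2 (c%:R : R).
  rewrite -log2M //; apply: ent_le => //; first exact: trAC.
    by rewrite muln_gt0 a0 c0.
  by apply: leq_trans (rank_leq_row _) _; rewrite card_prod !card_ord.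
have SAD_le1 : entropy (rho_AD U) <= log2 (a%:R : R) + log2 (d%:R : R).
  rewrite -log2M //; apply: ent_le => //; first exact: trAD.
    by rewrite muln_gt0 a0 d0.
  by apply: leq_trans (rank_leq_row _) _; rewrite card_prod !card_ord.
have SAD_le2 : entropy (rho_AD U) <= log2 (b%:R : R) + log2 (c%:R : R).
  rewrite -log2M //; apply: ent_le => //; first exact: trAD.
    by rewrite muln_gt0 b0 c0.
  by rewrite mxAD; apply: leq_trans (pt_rank _) _; rewrite card_prod !card_ord.
move: hI3; rewrite /I3 /I_AC /I_AD /I_ACD SA SC SD SCD SACD => hI3.
have SAC_ge : log2 (a%:R : R) + log2 (c%:R : R) <= entropy (rho_AC U).
  by case: hm => hm; rewrite -hm in hI3; lra.
have hAC : rho_AC U = maxmixed ('I_a * 'I_c)%type.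
  apply: mx_of_inj; rewrite mx_of_maxmixed.
  apply: ent_eq => //; first exact: trAC.
    by rewrite card_prod !card_ord muln_gt0 a0 c0.
  have e : (#|{: 'I_a * 'I_c}|%:R : R) = ((a * c)%N)%:R by rewrite card_prod !card_ord.
  by rewrite e log2M.
split => //.
  rewrite hAC entropy_maxmixed; last by rewrite card_prod !card_ord muln_gt0 a0 c0.
  have e : (#|{: 'I_a * 'I_c}|%:R : R) = ((a * c)%N)%:R by rewrite card_prod !card_ord.
  rewrite e log2M //; lra.
by move=> sigma hs; apply: residual.
Qed.

End ChoiComp.

Unset Implicit Arguments.
Local Close Scope sesquilinear_scope.

Theorem proposition5 (R : realType) (a b c d : nat)
    (U : ('I_c * 'I_d) -> ('I_a * 'I_b) -> R[i]) :
  (0 < a)%N -> (0 < b)%N -> (0 < c)%N -> (0 < d)%N ->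
  (a * b = c * d)%N ->
  unitary U ->
  I3 U = - 2 * log2 (minn (minn a b) (minn c d))%:R ->
  (a = minn (minn a b) (minn c d) \/ c = minn (minn a b) (minn c d)) ->
  [/\ rho_AC U = maxmixed ('I_a * 'I_c)%type,
      I_AC U = 0 &
      forall sigma : op R 'I_a, density sigma ->
        residual_channel U sigma = maxmixed 'I_c].
Proof.
move=> a0 b0 c0 d0 abcd HU; exact: main_sec.
Qed.
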